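(* Assume the following setup. Let $a,x,u,v$ be integers with $3\le a\le x$, $0\le u\le a-3$, and $u+2\le v\le\min\left(a-1,\frac{a(x-1)}{x}\right)$. Let $\lambda$ consist of $ua+v$ parts equal to $x$ and $v-(u+1)$ parts equal to $ax$, and let $n=|\lambda|$, so that $n=x[(a+1)(v-1)+1]$ and $n-1=xa(v-1)+xv-1$. For $0\le i\le n-2$ write uniquely $i=\frac{n}{x}r_i+(v-1)p_i+q_i$ with integers $0\le r_i<x$, $0\le p_i<a+2$, $0\le q_i<v-1$, $0\le (v-1)p_i+q_i<n/x$. Define \[ s_{2,i}=iax-(n-1)\left\lfloor\frac{iax}{n-1}\right\rfloor,\qquad f(i)=ar_i-(xv-1)p_i+xaq_i, \] and for an integer $k$ let $F_k=\left\{i\in\{1,\dots,n-2\}: k=-\left\lfloor \frac{f(i)}{n-1}\right\rfloor\right\}$. If $i\in F_k$, then $s_{2,i}=f(i)+k(n-1)$. *)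

(* Defs.v *)
From Stdlib Require Import ZArith List.
Open Scope Z_scope.

Definition lam (a x u v : Z) : list Z :=
  repeat x (Z.to_nat (u * a + v)) ++ repeat (a * x) (Z.to_nat (v - (u + 1))).

Definition size_lam (a x u v : Z) : Z := fold_right Z.add 0 (lam a x u v).

Definition s2 (a x n i : Z) : Z := i * a * x - (n - 1) * ((i * a * x) / (n - 1)).

Definition fF (a x v r p q : Z) : Z := a * r - (x * v - 1) * p + x * a * q.

(* Main.v *)
Require Import Defs.
From Stdlib Require Import ZArith List Lia.
Open Scope Z_scope.

Lemma fold_app (l1 l2 : list Z) :
  fold_right Z.add 0 (l1 ++ l2) = fold_right Z.add 0 l1 + fold_right Z.add 0 l2.
Proof. induction l1; simpl; lia. Qed.

Lemma fold_rep (c : Z) (m : nat) : fold_right Z.add 0 (repeat c m) = Z.of_nat m * c.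
Proof. induction m; [reflexivity|]; cbn [repeat fold_right]; rewrite IHm, Nat2Z.inj_succ; ring. Qed.

Lemma size_lam_eq a x u v : 0 <= u -> u + 2 <= v -> 0 <= a ->
  size_lam a x u v = x * ((a + 1) * (v - 1) + 1).
Proof.
  intros. unfold size_lam, lam. rewrite fold_app, !fold_rep.
  rewrite !Z2Nat.id by nia. ring.
Qed.

Theorem lemma4p6 (a x u v : Z)
  (ha : 3 <= a) (hax : a <= x) (hu0 : 0 <= u) (hu : u <= a - 3)
  (hv1 : u + 2 <= v) (hv2 : v <= a - 1) (hv3 : v * x <= a * (x - 1))
  (i r p q k : Z)
  (hi : 1 <= i <= size_lam a x u v - 2)
  (hdec : i = (size_lam a x u v / x) * r + (v - 1) * p + q)
  (hr : 0 <= r < x) (hp : 0 <= p < a + 2) (hq : 0 <= q < v - 1)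
  (hpq : 0 <= (v - 1) * p + q < size_lam a x u v / x)
  (hk : k = - (fF a x v r p q / (size_lam a x u v - 1))) :
  s2 a x (size_lam a x u v) i = fF a x v r p q + k * (size_lam a x u v - 1).
Proof.
  rewrite size_lam_eq in * by lia.
  set (N := (a + 1) * (v - 1) + 1) in *.
  assert (HN : x * N / x = N) by (rewrite Z.mul_comm; apply Z.div_mul; lia).
  rewrite HN in hdec.
  assert (Hpos : x * N - 1 > 0) by (unfold N; nia).
  subst k. unfold s2.
  assert (E : i * a * x = fF a x v r p q + (a * r + p) * (x * N - 1)).
  { subst i. unfold fF, N. ring. }
  assert (M : (i * a * x) mod (x * N - 1) = (fF a x v r p q) mod (x * N - 1)).
  { rewrite E. apply Z_mod_plus_full. }
  rewrite (Z.mod_eq _ (x * N - 1)) in M by lia.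
  rewrite (Z.mod_eq _ (x * N - 1)) in M by lia.
  lia.
Qed.
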